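(* Let $H$ be a digraph (possibly with loops) and let $D$ be an $H$-colored semicomplete digraph in which every directed $3$-cycle is an $H$-cycle. If $k \geq 2$, then $D$ has a $(k,H)$-kernel.
   Context: All digraphs are finite. A digraph is semicomplete if every two distinct vertices are joined by at least one arc. $D$ has no loops and comes with a map $\rho: A(D)\to V(H)$. For a walk $W=(x_0,\ldots,x_n)$ in $D$, there is an obstruction on $x_i$ if $(\rho(x_{i-1},x_i),\rho(x_i,x_{i+1})) \notin A(H)$; for an open walk this is considered at internal vertices $x_i$, $1\le i\le n-1$, for a closed walk at all $i\in\{0,\ldots,n-1\}$ with indices modulo $n$. $O_H(W)$ is the set of indices with an obstruction; the $H$-length is $l_H(W)=|O_H(W)|+1$ for open $W$ and $|O_H(W)|$ for closed $W$. An $H$-cycle is a directed cycle with no obstructions (the consecutive colours of its arcs, cyclically, form a closed walk in $H$). A $(k,H)$-kernel ($k\ge2$) is a set $S\subseteq V(D)$ such that for every two distinct $u,v\in S$ every directed $uv$-path in $D$ has $H$-length at least $k$, and for every $x\in V(D)\setminus S$ there is a directed path from $x$ to a vertex of $S$ of $H$-length at most $k-1$. *)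

(* Defs.v *)
From mathcomp Require Import all_boot.
Set Implicit Arguments. Unset Strict Implicit. Unset Printing Implicit Defensive.

Section HColoured.
(* D : finite digraph on V with arc relation A; rho : colouring of arcs
   (a total function on pairs; only its values on arcs of D matter). *)
Variables (VH : finType) (HA : rel VH) (V : finType) (A : rel V)
          (rho : V -> V -> VH).

Definition loopless : Prop := forall x : V, ~~ A x x.

Definition semicomplete : Prop :=
  forall u v : V, u != v -> A u v || A v u.

Definition dipath (u v : V) (s : seq V) : Prop :=
  match s with
  | [::] => False
  | x :: p => [/\ x = u, last x p = v, path A x p & uniq (x :: p)]
  end.

Fixpoint nobs (s : seq V) : nat :=
  match s with
  | x :: ((y :: z :: _) as t) => (~~ HA (rho x y) (rho y z)) + nobs t
  | _ => 0
  end.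

Definition Hlength (s : seq V) : nat := (nobs s).+1.

Definition dicycle3 (x y z : V) : Prop :=
  [/\ x != y, y != z, z != x & [/\ A x y, A y z & A z x]].

Definition Hcycle3 (x y z : V) : Prop :=
  [/\ HA (rho z x) (rho x y), HA (rho x y) (rho y z) & HA (rho y z) (rho z x)].

Definition kH_kernel (k : nat) (S : {set V}) : Prop :=
  (forall u v, u \in S -> v \in S -> u != v ->
     forall s, dipath u v s -> k <= Hlength s) /\
  (forall x, x \notin S ->
     exists v, v \in S /\ exists s, dipath x v s /\ Hlength s <= k - 1).

End HColoured.

(* Main.v *)
Require Import Defs.
From mathcomp Require Import all_boot.

Lemma nobs3 (VH : finType) (HA : rel VH) (V : finType) (rho : V -> V -> VH)
  (x y z : V) t :
  nobs HA rho [:: x, y, z & t] = (~~ HA (rho x y) (rho y z)) + nobs HA rho [:: y, z & t].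
Proof. by []. Qed.

Lemma nobs_tail (VH : finType) (HA : rel VH) (V : finType) (rho : V -> V -> VH)
  (x : V) t : nobs HA rho (x :: t) = 0 -> nobs HA rho t = 0.
Proof.
case: t => [|y [|z t]] //=.
by move/eqP; rewrite addn_eq0 => /andP[_ /eqP].
Qed.

Arguments nobs_tail {VH HA V rho x t}.
Arguments nobs3 {VH HA V rho x y z t}.

Lemma ext_path (VH : finType) (HA : rel VH) (V : finType) (A : rel V)
  (rho : V -> V -> VH)
  (hsemi : semicomplete A)
  (h3 : forall x y z : V, dicycle3 A x y z -> Hcycle3 HA rho x y z) (w : V) :
  forall p x, path A x p -> uniq (x :: p) -> nobs HA rho (x :: p) = 0 ->
    w \notin x :: p -> A (last x p) w ->
    exists s, [/\ path A x s, last x s = w, uniq (x :: s),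
      nobs HA rho (x :: s) = 0 & {subset s <= w :: p} /\
      (head w s = w \/ head w s = head w p)].
Proof.
elim=> [|y p IH] x.
  move=> _ _ _ wn /= Axw; exists [:: w]; split => //=; first by rewrite Axw.
    by rewrite andbT inE eq_sym; rewrite inE in wn.
  by split; [move=> u; rewrite !inE => ->|left].
move=> H1 H2 nb wn Alw; move: H1 H2 => /= /andP[Axy pa] /andP[xn up].
have xw : x != w by move: wn; rewrite !inE negb_or eq_sym => /andP[].
case Axw: (A x w).
  exists [:: w]; split => //=; first by rewrite Axw.
    by rewrite andbT inE.
  by split; [move=> u; rewrite !inE => ->|left].
have Awx : A w x by move: (hsemi w x); rewrite eq_sym xw Axw orbF => ->.
have wn' : w \notin y :: p by move: wn; rewrite inE negb_or => /andP[].
have [s [ps ls us ns [ss hs]]] := IH y pa up (nobs_tail nb) wn' Alw.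
have yw : y != w by move: wn'; rewrite inE negb_or eq_sym => /andP[].
have xy : x != y by move: xn; rewrite inE negb_or => /andP[].
exists (y :: s); split.
- by rewrite /= Axy.
- exact: ls.
- rewrite cons_uniq; apply/andP; split; last exact: us.
  rewrite inE negb_or.
  move: xn; rewrite inE negb_or => /andP[-> xp] /=.
  apply/negP => /ss; rewrite inE (negbTE xw) /=; exact/negP.
- case: s ps ls us ns ss hs => [|z t] ps ls us ns ss hs.
    by [].
  rewrite ns addn0; apply/eqP; rewrite eqb0 negbK.
  case: hs => /= hz.
    subst z.
    move: ps => /= /andP[Ayw _].
    by case: (h3 x y w); first by split => //; rewrite eq_sym.
  case: p pa up nb wn wn' Alw IH ss hz xn => [|z' p'] pa up nb wn wn' Alw IH ss /= hz xn.
    subst z.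
    move: ps => /= /andP[Ayw _].
    by case: (h3 x y w); first by split => //; rewrite eq_sym.
  subst z'; move: nb; rewrite nobs3 => /eqP; rewrite addn_eq0 => /andP[].
  by rewrite eqb0 negbK.
- split; last by right.
  move=> u; rewrite !inE => /orP[->|/ss]; first by rewrite orbT.
  by rewrite inE => /orP[->|->]; rewrite ?orbT.
Qed.

Arguments ext_path [VH HA V A rho] hsemi h3 [w p x].

Lemma absorb (VH : finType) (HA : rel VH) (V : finType) (A : rel V)
  (rho : V -> V -> VH)
  (hsemi : semicomplete A)
  (h3 : forall x y z : V, dicycle3 A x y z -> Hcycle3 HA rho x y z) :
  forall n (U : {set V}), #|U| = n.+1 -> exists2 v, v \in U &
    forall x, x \in U -> x != v -> exists s, [/\ path A x s, last x s = v,
      uniq (x :: s), nobs HA rho (x :: s) = 0 & all (mem U) s].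
Proof.
elim=> [|n IH] U cU.
  have [v Uv] : {v | v \in U} by apply/sigW/card_gt0P; rewrite cU.
  exists v => // x Ux xv; exfalso.
  have : 1 < #|U| by apply/card_gt1P; exists x, v.
  by rewrite cU.
have [w Uw] : {w | w \in U} by apply/sigW/card_gt0P; rewrite cU.
have cU' : #|U :\ w| = n.+1 by rewrite (cardsD1 w U) Uw in cU; case: cU.
have [v Uv' Hv] := IH _ cU'.
move: Uv'; rewrite !inE => /andP[vw Uv].
case Awv: (A w v).
  exists v => // x Ux xv.
  case: (eqVneq x w) => [->|xw].
    by exists [:: v]; split => //=; rewrite ?Awv ?Uv // inE eq_sym vw.
  have [s [ps ls us ns als]] := Hv x ltac:(by rewrite !inE xw) xv.
  exists s; split => //; apply/allP => u /(allP als); rewrite !inE => /andP[].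
  by [].
have Avw : A v w by move: (hsemi v w vw); rewrite Awv orbF.
exists w => // x Ux xw.
case: (eqVneq x v) => [->|xv].
  by exists [:: w]; split => //=; rewrite ?Avw ?Uw // inE vw.
have [p [pp lp up np alp]] := Hv x ltac:(by rewrite !inE xw) xv.
have wn : w \notin x :: p.
  rewrite inE negb_or eq_sym xw /=; apply/negP => /(allP alp).
  by rewrite !inE eqxx.
have [s [ps ls us ns [ss _]]] := ext_path hsemi h3 pp up np wn ltac:(by rewrite lp).
exists s; split => //; apply/allP => u /ss; rewrite inE => /orP[/eqP->//|/(allP alp)].
by rewrite !inE => /andP[].
Qed.

Arguments absorb [VH HA V A rho] hsemi h3 [n U].

Theorem theorem7 (VH : finType) (HA : rel VH) (V : finType) (A : rel V)
  (rho : V -> V -> VH)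
  (hloop : loopless A) (hsemi : semicomplete A)
  (h3 : forall x y z : V, dicycle3 A x y z -> Hcycle3 HA rho x y z)
  (k : nat) (hk : 2 <= k) :
  exists S : {set V}, kH_kernel HA A rho k S.
Proof.
case: (pickP (fun _ : V => true)) => [x0 _|none].
  have : 0 < #|[set: V]| by apply/card_gt0P; exists x0; rewrite inE.
  case cT: #|[set: V]| => [//|n] _.
  have [v _ Hv] := absorb hsemi h3 cT.
  exists [set v]; split.
    by move=> u u' /set1P-> /set1P->; rewrite eqxx.
  move=> x; rewrite inE => xv.
  have [s [ps ls us ns _]] := Hv x ltac:(by rewrite inE) xv.
  exists v; split; first by rewrite inE.
  exists (x :: s); split => //.
  by rewrite /Hlength ns; case: k hk => [|[|k']].
exists set0; split; first by move=> u; rewrite inE.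
by move=> x; have := none x.
Qed.
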